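(* Let $d\ge 1$ and $2\le n_1\le n_2\le\cdots\le n_d$ be integers, and let $G=K_{n_1}\times K_{n_2}\times\cdots\times K_{n_d}$. Then $\sigma_T(G)\le 2d-1$ if $n_1=2$, and $\sigma_T(G)\le 2d$ if $n_1\ge 3$.
   Context: $K_n$ is the complete graph on $n$ vertices and $\times$ is the Cartesian product of graphs. Thus $G$ has vertex set $\{(x_1,\dots,x_d): x_i\in\{0,1,\dots,n_i-1\}\}$, two vertices being adjacent iff they differ in exactly one coordinate (a Hamming graph). For a spanning tree $T$ of a connected graph $G$, $d_T(u,v)$ is the distance between $u$ and $v$ in $T$, $\sigma_T(G,T):=\max_{uv\in E(G)} d_T(u,v)$, and the tree-stretch is $\sigma_T(G):=\min\{\sigma_T(G,T): T \text{ a spanning tree of } G\}$. *)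

(* Defs.v *)
From mathcomp Require Import all_boot.
Set Implicit Arguments. Unset Strict Implicit. Unset Printing Implicit Defensive.

Section Graphs.
Variable V : finType.

(* An (undirected) subgraph is given by a set of ordered pairs, meant to be symmetric. *)
Definition trel (T : {set V * V}) : rel V := fun x y => (x, y) \in T.

(* Graph distance in the graph with adjacency e: the least k such that there is a walk
   u = x_0, x_1, ..., x_k = v of length k (k ranges over 0..#|V|-1, which suffices in a
   connected graph; #|V| is returned when v is unreachable). *)
Definition dist (e : rel V) (u v : V) : nat :=
  find (fun k => [exists p : k.-tuple V, path e u p && (last u p == v)]) (iota 0 #|V|).

(* No cycle x_1 ... x_k (k >= 3, distinct vertices) in the graph e.  A sequence of distinct
   vertices has length at most #|V|, so k is bounded by #|V|. *)
Definition acyclic (e : rel V) : bool :=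
  [forall k : 'I_#|V|.+1, forall p : (val k).-tuple V,
     ~~ [&& 3 <= val k, uniq p & cycle e p]].

Definition spanning_tree (G : rel V) (T : {set V * V}) : bool :=
  [&& [forall x, forall y, ((x, y) \in T) ==> G x y],
      [forall x, forall y, ((x, y) \in T) ==> ((y, x) \in T)],
      [forall x, forall y, connect (trel T) x y] &
      acyclic (trel T)].

Definition stretch (G : rel V) (T : {set V * V}) : nat :=
  \max_(u : V) \max_(v : V | G u v) dist (trel T) u v.

(* sigma_T(G) = min over spanning trees T of sigma_T(G, T)
   (the default #|V| is only used if G has no spanning tree). *)
Definition tree_stretch (G : rel V) : nat :=
  \big[minn/#|V|]_(T : {set V * V} | spanning_tree G T) stretch G T.

End Graphs.

Definition hvert (d : nat) (n : nat -> nat) : finType :=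
  {dffun forall i : 'I_d, 'I_(n i)}.

Definition hamming_adj (d : nat) (n : nat -> nat) : rel (hvert d n) :=
  fun u v => #|[set i : 'I_d | u i != v i]| == 1.
Arguments hamming_adj : clear implicits.
Arguments hvert : clear implicits.

(* Main.v *)
Require Import Defs.
From mathcomp Require Import all_boot.
From mathcomp Require Import zify.
Set Implicit Arguments. Unset Strict Implicit. Unset Printing Implicit Defensive.

Section W.
Variables (T : finType) (e : rel T).
Inductive walk : nat -> T -> T -> Prop :=
 | Wnil u : walk 0 u u
 | Wcons k u v w : e u v -> walk k v w -> walk k.+1 u w.

Lemma walk_cat a b x y z : walk a x y -> walk b y z -> walk (a + b) x z.
Proof.
elim => [u|k u v w huv _ IH] hb; first by rewrite add0n.
rewrite addSn; exact: Wcons huv (IH hb).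
Qed.

Lemma walk_snoc a x y z : walk a x y -> e y z -> walk a.+1 x z.
Proof. move=> h hyz; rewrite -addn1; exact: walk_cat h (Wcons hyz (Wnil z)). Qed.

Lemma walk_rev (he : symmetric e) a x y : walk a x y -> walk a y x.
Proof.
elim => [u|k u v w huv _ IH]; first exact: Wnil.
apply: walk_snoc IH _; by rewrite he.
Qed.

Lemma walk_path k x y : walk k x y -> exists p : k.-tuple T, path e x p && (last x p == y).
Proof.
elim => [u|k0 u v w huv _ [p /andP [hp hl]]].
  by exists [tuple]; rewrite /= eqxx.
by exists (cons_tuple v p) => /=; rewrite huv hp hl.
Qed.

Lemma walk_dist k x y : walk k x y -> dist e x y <= k.
Proof.
move=> /walk_path hw; rewrite /dist.
case: (ltnP k #|T|) => hk; last first.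
  by apply: leq_trans (find_size _ _) _; rewrite size_iota.
rewrite leqNgt; apply/negP => hlt.
have := before_find 0 hlt; rewrite nth_iota // add0n.
by move/negbT/negP; apply; apply/existsP.
Qed.

Lemma walk_connect k x y : walk k x y -> connect e x y.
Proof.
move/walk_path => [p /andP [hp /eqP hl]]; apply/connectP; exists p => //.
Qed.

Lemma bigmin_le (I : eqType) (s : seq I) (P : pred I) (F : I -> nat) m i0 :
  i0 \in s -> P i0 -> \big[minn/m]_(i <- s | P i) F i <= F i0.
Proof.
elim: s => [//|a s IH]; rewrite inE => /orP [/eqP <-|hs] hp; rewrite big_cons.
  by rewrite hp geq_minl.
case: ifP => _; last exact: IH.
by apply: leq_trans (geq_minr _ _) (IH hs hp).
Qed.
End W.

Section S.
Variables (d : nat) (n : nat -> nat).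
Hypothesis hn0 : forall i : 'I_d, 0 < n i.
Local Notation V := (hvert d n).
Definition zer (i : 'I_d) : 'I_(n i) := Ordinal (hn0 i).
Definition trunc (m : nat) (x : V) : V := [ffun i : 'I_d => if m <= i then zer i else x i].
Definition nz (x : V) (i : 'I_d) : bool := (x i : nat) != 0.
Definition par (x y : V) : bool :=
  [exists j : 'I_d, [&& nz x j, y == trunc j x & trunc j.+1 x == x]].
Definition Tt : {set V * V} := [set q | par q.1 q.2 || par q.2 q.1].
Definition pot (x : V) := \sum_(i < d) (x i : nat).

Lemma trunc_trunc a b x : trunc a (trunc b x) = trunc (minn a b) x.
Proof.
apply/ffunP => i; rewrite !ffunE geq_min.
by case: (a <= i); case: (b <= i).
Qed.

Lemma trunc_id x : trunc d x = x.
Proof. by apply/ffunP => i; rewrite ffunE leqNgt ltn_ord. Qed.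

Lemma trunc0 x y : trunc 0 x = trunc 0 y.
Proof. by apply/ffunP => i; rewrite !ffunE. Qed.

Lemma step (i : 'I_d) y : trunc i.+1 y = y ->
  if nz y i then is_true (par y (trunc i y)) else trunc i y = y.
Proof.
move=> H; case: ifP => Hnz.
  by apply/existsP; exists i; rewrite Hnz eqxx H eqxx.
apply/ffunP => j; rewrite ffunE; case: ltngtP => // hij.
- have := congr1 (fun f : V => f j) H; rewrite /= ffunE hij => -> //.
- have Eij : j = i by apply: val_inj.
  rewrite Eij; apply: val_inj => /=.
  by move/negbFE/eqP: Hnz.
Qed.

Lemma par_adj x y : par x y -> hamming_adj d n x y.
Proof.
case/existsP => j /and3P [hnz /eqP -> /eqP hx].
rewrite /hamming_adj; apply/eqP; rewrite -(cards1 j); apply: eq_card => i.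
rewrite !inE ffunE.
case: (ltngtP j i) => hji.
- have := congr1 (fun f : V => f i) hx; rewrite /= ffunE hji => <-.
  rewrite eqxx; case: eqP => // hij.
  by rewrite hij ltnn in hji.
- rewrite eqxx; case: eqP => // hij.
  by rewrite hij ltnn in hji.
- have Eij : i = j by apply: val_inj.
  rewrite Eij eqxx; apply: contra hnz => /eqP -> //.
Qed.

Lemma adj_sym u v : hamming_adj d n u v = hamming_adj d n v u.
Proof.
rewrite /hamming_adj; congr (_ == 1); apply: eq_card => i; by rewrite !inE eq_sym.
Qed.

Lemma par_lt x y : par y x -> pot x < pot y.
Proof.
case/existsP => j /and3P [hnz /eqP -> /eqP hy].
rewrite /pot (bigD1 j) //= [X in _ < X](bigD1 j) //= ffunE leqnn /=.
have Hs : \sum_(i < d | i != j) (trunc j y i : nat) <= \sum_(i < d | i != j) (y i : nat).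
  apply: leq_sum => i _; rewrite ffunE; case: ifP => // _.
rewrite /nz -lt0n in hnz.
rewrite add0n; apply: (leq_ltn_trans Hs); by rewrite addnC -[X in X < _]addn0 ltn_add2l.
Qed.

Lemma par_uniq x y z : par x y -> par x z -> y = z.
Proof.
case/existsP => j /and3P [h1 /eqP -> /eqP h2].
case/existsP => k /and3P [h3 /eqP -> /eqP h4].
suff -> : j = k by [].
apply: val_inj; case: (ltngtP j k) => // hjk.
- have := congr1 (fun f : V => f k) h2; rewrite /= ffunE hjk => hx.
  by move: h3; rewrite /nz -hx.
- have := congr1 (fun f : V => f j) h4; rewrite /= ffunE hjk => hx.
  by move: h1; rewrite /nz -hx.
Qed.

Lemma Tsym : symmetric (trel Tt).
Proof. by move=> x y; rewrite /trel !inE /= orbC. Qed.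

Lemma par_T x y : par x y -> trel Tt x y.
Proof. by rewrite /trel inE /= => ->. Qed.

Lemma walk_trunc t : t <= d -> forall x,
  exists2 k, k <= t & walk (trel Tt) k x (trunc (d - t) x).
Proof.
elim: t => [|t IH] ht x.
  by exists 0 => //; rewrite subn0 trunc_id; exact: Wnil.
have [k hk hw] := IH (ltnW ht) x.
have hm : d - t.+1 < d by lia.
have hm1 : (d - t.+1).+1 = d - t by lia.
have hy : trunc (Ordinal hm).+1 (trunc (d - t) x) = trunc (d - t) x.
  by rewrite trunc_trunc /= hm1 minnn.
have hty : trunc (Ordinal hm) (trunc (d - t) x) = trunc (d - t.+1) x.
  rewrite trunc_trunc /=; congr trunc; apply/minn_idPl; lia.
have := step hy; case: ifP => _ h.
  by exists k.+1 => //; rewrite -hty; apply: walk_snoc hw (par_T h).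
by exists k; [lia | rewrite -hty h].
Qed.

Lemma walk_up m x : m <= d -> exists2 k, k <= d - m & walk (trel Tt) k x (trunc m x).
Proof.
move=> hm; have := walk_trunc (leq_subr m d) x; by rewrite subKn.
Qed.

Lemma acyc (p : seq V) : 3 <= size p -> uniq p -> cycle (trel Tt) p -> False.
Proof.
case: p => [//|x0 p'] hs hu hc.
have [x hx hmax] := @arg_maxnP V x0 (fun y => y \in x0 :: p') pot (mem_head _ _).
case: (rot_to hx) => i s' hrot.
have hc' : cycle (trel Tt) (x :: s') by rewrite -hrot rot_cycle.
have hu' : uniq (x :: s') by rewrite -hrot rot_uniq.
have hs' : 3 <= size (x :: s') by rewrite -hrot size_rot.
have hmem : forall y, y \in x :: s' -> y \in x0 :: p' by move=> y; rewrite -hrot mem_rot.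
move: hc' hu' hs' hmem; clear hrot; case: s' => [|y [|w r]] // hc' hu' _ hmem.
move: hc'; rewrite /cycle rcons_path /= => /andP [/andP [hxy _] hzx].
have hpy : par x y.
  move: hxy; rewrite /trel inE /= => /orP [//|/par_lt].
  have hy : y \in x :: y :: w :: r by rewrite !inE eqxx orbT.
  have := hmax y (hmem y hy); rewrite /= leqNgt => /negbTE -> //.
have hpz : par x (last w r).
  move: hzx; rewrite /trel inE /= => /orP [/par_lt|//].
  have hz : last w r \in x :: y :: w :: r.
    by have := mem_last w r; rewrite !inE => ->; rewrite !orbT.
  have := hmax (last w r) (hmem _ hz).
  by rewrite /= leqNgt => /negbTE ->.
have E := par_uniq hpy hpz.
move: hu'; rewrite /= => /andP [_ /andP [hy _]].
by move: hy; rewrite E mem_last.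
Qed.

Lemma Tspan : spanning_tree (hamming_adj d n) Tt.
Proof.
rewrite /spanning_tree; apply/and4P; split.
- apply/forallP => x; apply/forallP => y; apply/implyP.
  rewrite inE /= => /orP [/par_adj // | /par_adj]; by rewrite adj_sym.
- apply/forallP => x; apply/forallP => y; apply/implyP.
  by rewrite !inE /= orbC.
- apply/forallP => x; apply/forallP => y.
  have [a _ ha] := walk_up x (leq0n d); have [b _ hb] := walk_up y (leq0n d).
  have hb' := walk_rev Tsym hb; rewrite -(trunc0 x y) in hb'.
  exact: walk_connect (walk_cat ha hb').
- apply/forallP => k; apply/forallP => p; apply/negP => /and3P [hk hu hc].
  rewrite -(size_tuple p) in hk; exact: acyc hk hu hc.
Qed.

Lemma step_walk (i : 'I_d) y : trunc i.+1 y = y ->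
  exists2 a, walk (trel Tt) a y (trunc i y) & a <= nz y i.
Proof.
move=> hy; have := step hy; case: ifP => _ hp.
  by exists 1 => //; exact: Wcons (par_T hp) (Wnil _ _).
by exists 0 => //; rewrite hp; exact: Wnil.
Qed.

Lemma edge_bound u v : hamming_adj d n u v -> exists i : 'I_d,
  exists2 k, walk (trel Tt) k u v &
     (k <= 2 * (d - i.+1) + 2) /\ (n i = 2 -> k <= 2 * (d - i.+1) + 1).
Proof.
move/cards1P => [i hi]; exists i.
have hag : forall j, j != i -> u j = v j.
  move=> j hj; apply/eqP; apply: contraNT hj => hne.
  have : j \in [set i0 | u i0 != v i0] by rewrite inE.
  by rewrite hi inE.
have hne : u i != v i.
  have : i \in [set i0 | u i0 != v i0] by rewrite hi set11.
  by rewrite inE.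
have [a ha hwa] := walk_up u (ltn_ord i).
have [b hb hwb] := walk_up v (ltn_ord i).
have hu1 : trunc i.+1 (trunc i.+1 u) = trunc i.+1 u by rewrite trunc_trunc minnn.
have hv1 : trunc i.+1 (trunc i.+1 v) = trunc i.+1 v by rewrite trunc_trunc minnn.
have [a' hwa' ha'] := step_walk hu1.
have [b' hwb' hb'] := step_walk hv1.
have Ew : trunc i (trunc i.+1 v) = trunc i (trunc i.+1 u).
  rewrite !trunc_trunc; apply/ffunP => j; rewrite !ffunE.
  case: ifP => // hij; apply/esym/hag; apply: contraFN hij => /eqP ->; by rewrite geq_min leqnn.
rewrite Ew in hwb'.
have hw := walk_cat hwa (walk_cat hwa' (walk_rev Tsym (walk_cat hwb hwb'))).
exists (a + (a' + (b + b'))) => //.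
have hnu : nz (trunc i.+1 u) i = nz u i by rewrite /nz ffunE ltnn.
have hnv : nz (trunc i.+1 v) i = nz v i by rewrite /nz ffunE ltnn.
rewrite hnu in ha'; rewrite hnv in hb'.
have h2 : n i = 2 -> nz u i + nz v i <= 1.
  move=> h2; suff : ~~ (nz u i && nz v i) by case: (nz u i); case: (nz v i).
  apply/negP => /andP [h1 h1'].
  have hu2 := leq_trans (ltn_ord (u i)) (eq_leq h2); have hv2 := leq_trans (ltn_ord (v i)) (eq_leq h2).
  rewrite /nz -lt0n in h1 h1'.
  move/negP: hne; apply; apply/eqP/val_inj => /=.
  move: h1'; rewrite -lt0n => h1'. move: hu2 hv2 h1 h1'; case: (u i) => [[|[|?]] ?] //; case: (v i) => [[|[|?]] ?] //.
have hA : a' <= 1 by apply: leq_trans ha' _; case: nz.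
have hB : b' <= 1 by apply: leq_trans hb' _; case: nz.
split; first lia.
move/h2 => h3; have hAB : a' + b' <= 1 by apply: leq_trans (leq_add ha' hb') h3.
lia.
Qed.

Lemma stretch_Tt B : (forall u v, hamming_adj d n u v -> exists2 k, walk (trel Tt) k u v & k <= B) ->
  stretch (hamming_adj d n) Tt <= B.
Proof.
move=> H; rewrite /stretch; apply/bigmax_leqP => u _; apply/bigmax_leqP => v huv.
have [k hw hk] := H u v huv; exact: leq_trans (walk_dist hw) hk.
Qed.

Lemma tree_le : tree_stretch (hamming_adj d n) <= stretch (hamming_adj d n) Tt.
Proof. rewrite /tree_stretch; apply: bigmin_le; [exact: mem_index_enum | exact: Tspan]. Qed.
End S.

(* Indices are 0-based: n 0, ..., n (d-1) play the role of n_1 <= ... <= n_d. *)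
Theorem lemma3p1 (d : nat) (n : nat -> nat)
  (hd : 1 <= d)
  (hn : forall i, i < d -> 2 <= n i)
  (hmono : forall i j, i <= j -> j < d -> n i <= n j) :
  (n 0 = 2 -> tree_stretch (hamming_adj d n) <= 2 * d - 1) /\
  (3 <= n 0 -> tree_stretch (hamming_adj d n) <= 2 * d).
Proof.
have hn0 : forall i : 'I_d, 0 < n i by move=> i; apply: leq_trans (hn i (ltn_ord i)).
split => h0; apply: leq_trans (tree_le hn0) _; apply: stretch_Tt => u v huv;
  have [i [k hw [hk1 hk2]]] := edge_bound hn0 huv; exists k => //;
  have hi := ltn_ord i.
  have [hi0|hi0] := eqVneq (i : nat) 0.
    have := hk2; rewrite hi0 => /(_ h0); lia.
  move: hi0; rewrite -lt0n; lia.
lia.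
Qed.
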